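(* Let $\kappa:=\frac12\operatorname{arccosh}(3/2)$ and for real $u>\kappa$ put \begin{equation*} \ell(u) := \frac{1}{2}(e^{4u}-e^{2u}-2-e^{-2u}+e^{-4u}) + \frac{e^{2u}-e^{-2u}}{2}\sqrt{(e^{2u}+e^{-2u}+1)(e^{2u}+e^{-2u}-3)}, \end{equation*} where $\sqrt{\cdot}$ is the nonnegative square root. If $u>\kappa$, then $\ell(u)$ is a real number with $\ell(u)>1$. *)

(* Defs.v *)
From Stdlib Require Import Reals.
Open Scope R_scope.

Definition arccosh (x : R) : R := ln (x + sqrt (x ^ 2 - 1)).

Definition kappa : R := / 2 * arccosh (3 / 2).

Definition ell (u : R) : R :=
  / 2 * (exp (4 * u) - exp (2 * u) - 2 - exp (- (2 * u)) + exp (- (4 * u)))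
  + (exp (2 * u) - exp (- (2 * u))) / 2 *
    sqrt ((exp (2 * u) + exp (- (2 * u)) + 1) * (exp (2 * u) + exp (- (2 * u)) - 3)).

(* Main.v *)
Require Import Defs.
From Stdlib Require Import Reals Lra Psatz.
Open Scope R_scope.

Theorem lemma4p4 (u : R) (hu : kappa < u) : 1 < ell u.
Proof.
  set (sv := sqrt ((3/2)^2 - 1)).
  assert (hs2 : sv * sv = 5/4).
  { unfold sv. rewrite sqrt_sqrt; lra. }
  assert (hs0 : 0 <= sv) by (unfold sv; apply sqrt_pos).
  assert (hk : exp (2 * kappa) = 3/2 + sv).
  { unfold kappa, arccosh. replace (2 * (/2 * ln (3/2 + sqrt ((3/2)^2 - 1))))
      with (ln (3/2 + sqrt ((3/2)^2 - 1))) by field.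
    rewrite exp_ln; fold sv; lra. }
  set (t := exp (2 * u)).
  assert (ht : 3/2 + sv < t).
  { rewrite <- hk. unfold t. apply exp_increasing. lra. }
  assert (hw : exp (- (2 * u)) = / t) by (unfold t; apply exp_Ropp).
  assert (h4 : exp (4 * u) = t * t).
  { unfold t. rewrite <- exp_plus. f_equal. ring. }
  assert (h4' : exp (- (4 * u)) = / t * / t).
  { rewrite <- hw. rewrite <- exp_plus. f_equal. ring. }
  unfold ell. fold t. rewrite hw, h4, h4'.
  set (w := / t).
  assert (htw : t * w = 1) by (unfold w; field; lra).
  assert (hw0 : 0 < w) by (unfold w; apply Rinv_0_lt_compat; lra).
  assert (hwt : w < t) by nra.
  assert (hsq := sqrt_pos ((t + w + 1) * (t + w - 3))).
  set (q := sqrt ((t + w + 1) * (t + w - 3))) in *.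
  assert (hc : t + w > 3).
  { assert (ha : (3/2 + sv) * (3/2 - sv) = 1) by nra.
    assert (t * (3/2+sv) > 1) by nra.
    nra. }
  assert (0 <= (t - w) / 2 * q).
  { apply Rmult_le_pos; [lra | exact hsq]. }
  nra.
Qed.
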